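(* Let $(X,d)$ be a complete separable metric space and let $f\colon X\to X$ be a continuous map. If $f$ is strongly mixing, then every uniformly Li-Yorke scrambled set of $f$ is of first category in $X$.
   Context: $f$ is strongly mixing if for all nonempty open $U,V\subset X$ there is $N\in\mathbb{N}$ such that $U\cap f^{-n}(V)\neq\emptyset$ for all $n\geq N$. A subset $S\subset X$ with at least two points is uniformly Li-Yorke scrambled for $f$ if there exist sequences $\{p_n\}$, $\{q_n\}$ in $\mathbb{N}$ such that for all distinct $x,y\in S$: $\lim_{n} d(f^{p_n}(x),f^{p_n}(y))=0$ and $\lim_{n} d(f^{q_n}(x),f^{q_n}(y))=\infty$. A set is of first category if its complement contains a dense $G_\delta$ subset. *)

(* Defs.v *)
From Stdlib Require Import Reals Classical.
Open Scope R_scope.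

Section MetricDefs.
Context {X : Type}.

Definition is_metric (d : X -> X -> R) : Prop :=
  (forall x y, 0 <= d x y) /\
  (forall x y, d x y = 0 <-> x = y) /\
  (forall x y, d x y = d y x) /\
  (forall x y z, d x z <= d x y + d y z).

Definition open_set (d : X -> X -> R) (U : X -> Prop) : Prop :=
  forall x, U x -> exists e, 0 < e /\ forall y, d x y < e -> U y.

Definition nonempty (U : X -> Prop) : Prop := exists x, U x.

Definition dense (d : X -> X -> R) (A : X -> Prop) : Prop :=
  forall x e, 0 < e -> exists a, A a /\ d x a < e.

Definition countable_set (A : X -> Prop) : Prop :=
  exists h : X -> nat, forall x y, A x -> A y -> h x = h y -> x = y.

Definition separable (d : X -> X -> R) : Prop :=
  exists A, countable_set A /\ dense d A.

Definition cauchy_seq (d : X -> X -> R) (u : nat -> X) : Prop :=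
  forall e, 0 < e -> exists N, forall m n, (N <= m)%nat -> (N <= n)%nat -> d (u m) (u n) < e.

Definition seq_converges (d : X -> X -> R) (u : nat -> X) (l : X) : Prop :=
  forall e, 0 < e -> exists N, forall n, (N <= n)%nat -> d (u n) l < e.

Definition complete (d : X -> X -> R) : Prop :=
  forall u, cauchy_seq d u -> exists l, seq_converges d u l.

Definition continuous_map (d : X -> X -> R) (f : X -> X) : Prop :=
  forall x e, 0 < e -> exists delta, 0 < delta /\
    forall y, d x y < delta -> d (f x) (f y) < e.

Fixpoint iter (f : X -> X) (n : nat) (x : X) : X :=
  match n with O => x | S m => f (iter f m x) end.

Definition strongly_mixing (d : X -> X -> R) (f : X -> X) : Prop :=
  forall U V, open_set d U -> nonempty U -> open_set d V -> nonempty V ->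
    exists N : nat, forall n, (N <= n)%nat -> exists x, U x /\ V (iter f n x).

Definition uniformly_LY_scrambled (d : X -> X -> R) (f : X -> X) (S : X -> Prop) : Prop :=
  (exists x y, S x /\ S y /\ x <> y) /\
  exists p q : nat -> nat,
    forall x y, S x -> S y -> x <> y ->
      Un_cv (fun n => d (iter f (p n) x) (iter f (p n) y)) 0 /\
      cv_infty (fun n => d (iter f (q n) x) (iter f (q n) y)).

Definition G_delta (d : X -> X -> R) (G : X -> Prop) : Prop :=
  exists U : nat -> X -> Prop, (forall n, open_set d (U n)) /\
    forall x, G x <-> (forall n, U n x).

Definition first_category (d : X -> X -> R) (S : X -> Prop) : Prop :=
  exists G, G_delta d G /\ dense d G /\ forall x, G x -> ~ S x.

End MetricDefs.

(* Main.v *)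
Require Import Defs.
From Stdlib Require Import Reals Lra Lia ClassicalEpsilon Classical Arith.
Import Defs.
Open Scope R_scope.

Lemma baire (X : Type) (d : X -> X -> R) : is_metric d -> complete d ->
  forall U : nat -> X -> Prop, (forall n, open_set d (U n)) -> (forall n, dense d (U n)) ->
  dense d (fun x => forall n, U n x).
Proof.
  intros [Hpos [Hid [Hsym Htri]]] Hc U Hopen Hdense x e He.
  assert (Hstep: forall (k:nat) (xr : X*R), exists xr' : X*R, 0 < snd xr ->
    (0 < snd xr' /\ snd xr' <= snd xr / 2 /\ snd xr' <= / (INR k + 1) /\
     d (fst xr) (fst xr') < snd xr / 2 /\
     forall z, d (fst xr') z < 2 * snd xr' -> U k z)).
  { intros k [y r]. simpl. destruct (Rlt_or_le 0 r) as [Hr|Hr].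
    - destruct (Hdense k y (r/2)) as [y' [Hy' Hd]]; [lra|].
      destruct (Hopen k y' Hy') as [s [Hs Hball]].
      assert (Hk : 0 < / (INR k + 1)) by (apply Rinv_0_lt_compat; pose proof (pos_INR k); lra).
      exists (y', Rmin (Rmin (s/2) (r/2)) (/(INR k + 1))). simpl; intros _.
      pose proof (Rmin_l (Rmin (s/2) (r/2)) (/(INR k + 1))).
      pose proof (Rmin_r (Rmin (s/2) (r/2)) (/(INR k + 1))).
      pose proof (Rmin_l (s/2) (r/2)). pose proof (Rmin_r (s/2) (r/2)).
      split; [|split; [lra|split; [lra|split; [lra|]]]].
      + apply Rmin_glb_lt; [apply Rmin_glb_lt|]; lra.
      + intros z Hz. apply Hball. lra.
    - exists (y, r). intros; lra. }
  pose (F := fun k xr => proj1_sig (constructive_indefinite_description _ (Hstep k xr))).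
  assert (HF : forall k xr, 0 < snd xr -> 
    (0 < snd (F k xr) /\ snd (F k xr) <= snd xr / 2 /\ snd (F k xr) <= / (INR k + 1) /\
     d (fst xr) (fst (F k xr)) < snd xr / 2 /\
     forall z, d (fst (F k xr)) z < 2 * snd (F k xr) -> U k z)).
  { intros k xr H. unfold F. destruct constructive_indefinite_description as [y Hy]. simpl. auto. }
  pose (sq := fix sq (k:nat) : X*R := match k with O => (x, e/2) | S k' => F k' (sq k') end).
  assert (HsqS : forall k, sq (S k) = F k (sq k)) by reflexivity.
  assert (Hp : forall k, 0 < snd (sq k)).
  { induction k. simpl; lra. rewrite HsqS. apply HF; auto. }
  assert (Hpr : forall k, snd (sq (S k)) <= snd (sq k) / 2 /\ snd (sq (S k)) <= / (INR k + 1) /\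
     d (fst (sq k)) (fst (sq (S k))) < snd (sq k) / 2 /\
     forall z, d (fst (sq (S k))) z < 2 * snd (sq (S k)) -> U k z).
  { intro k. rewrite HsqS. apply HF; auto. }
  assert (Htel : forall k m, (k <= m)%nat -> d (fst (sq k)) (fst (sq m)) <= snd (sq k) - snd (sq m)).
  { intros k m Hkm. induction Hkm.
    - assert (d (fst (sq k)) (fst (sq k)) = 0) by (apply Hid; auto). lra.
    - destruct (Hpr m) as [H1 [H2 [H3 H4]]].
      pose proof (Htri (fst (sq k)) (fst (sq m)) (fst (sq (S m)))). lra. }
  assert (Hcau : cauchy_seq d (fun k => fst (sq k))).
  { intros eps Heps. destruct (INR_unbounded (2/eps)) as [N HN].
    exists (S N). intros m n Hm Hn.
    pose proof (Htel _ _ Hm). pose proof (Htel _ _ Hn).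
    pose proof (Hp m). pose proof (Hp n).
    pose proof (Htri (fst (sq m)) (fst (sq (S N))) (fst (sq n))).
    pose proof (Hsym (fst (sq m)) (fst (sq (S N)))).
    destruct (Hpr N) as [_ [Hr4 _]].
    assert (HA : 0 < INR N + 1) by (pose proof (pos_INR N); lra).
    assert (Hi : / (INR N + 1) * (INR N + 1) = 1) by (field; lra).
    assert (He2 : (INR N + 1) * eps > 2).
    { assert (2 / eps * eps = 2) by (field; lra). nra. }
    pose proof (Hp (S N)).
    assert (snd (sq (S N)) < eps / 2).
    { assert (snd (sq (S N)) * (INR N + 1) <= 1).
      { apply Rle_trans with (/(INR N+1) * (INR N+1)); [apply Rmult_le_compat_r; lra | lra]. }
      apply Rnot_le_lt. intro Hc2.
      assert (eps / 2 * (INR N + 1) <= snd (sq (S N)) * (INR N + 1)) by (apply Rmult_le_compat_r; lra).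
      lra. }
    lra. }
  destruct (Hc _ Hcau) as [l Hl].
  assert (Hlim : forall k, d (fst (sq k)) l <= snd (sq k)).
  { intro k. apply Rnot_lt_le. intro Hlt.
    destruct (Hl (d (fst (sq k)) l - snd (sq k))) as [N HN]; [lra|].
    pose proof (HN (max k N) (Nat.le_max_r _ _)).
    pose proof (Htel k (max k N) (Nat.le_max_l _ _)).
    pose proof (Hp (max k N)).
    pose proof (Htri (fst (sq k)) (fst (sq (max k N))) l). lra. }
  exists l. split.
  - intro n. destruct (Hpr n) as [_ [_ [_ H4]]]. apply H4.
    pose proof (Hlim (S n)). pose proof (Hp (S n)). lra.
  - pose proof (Hlim 0%nat). simpl in H. lra.
Qed.

Lemma iter_cont (X : Type) (d : X -> X -> R) (f : X -> X) :
  continuous_map d f -> forall k, continuous_map d (iter f k).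
Proof.
  intros Hf k. induction k; intros x e He; simpl.
  - exists e; split; auto.
  - destruct (Hf (iter f k x) e He) as [d1 [Hd1 H1]].
    destruct (IHk x d1 Hd1) as [d2 [Hd2 H2]].
    exists d2; split; auto.
Qed.

Lemma open_gt (X : Type) (d : X -> X -> R) (g : X -> X) : is_metric d ->
  continuous_map d g -> forall c eps, open_set d (fun y => eps < d (g y) c).
Proof.
  intros [Hpos [Hid [Hsym Htri]]] Hg c eps y Hy.
  destruct (Hg y (d (g y) c - eps)) as [dl [Hdl H]]; [lra|].
  exists dl; split; auto. intros z Hz. specialize (H z Hz).
  pose proof (Htri (g y) (g z) c). lra.
Qed.

Lemma ball_open (X : Type) (d : X -> X -> R) : is_metric d ->
  forall c r, open_set d (fun y => d c y < r).
Proof.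
  intros [Hpos [Hid [Hsym Htri]]] c r y Hy.
  exists (r - d c y); split; [lra|]. intros z Hz.
  pose proof (Htri c y z). lra.
Qed.

Lemma ball_ne (X : Type) (d : X -> X -> R) : is_metric d ->
  forall c r, 0 < r -> nonempty (fun y => d c y < r).
Proof.
  intros [Hpos [Hid [Hsym Htri]]] c r Hr. exists c.
  assert (d c c = 0) by (apply Hid; auto). lra.
Qed.

Theorem proposition2p8 (X : Type) (d : X -> X -> R) (f : X -> X) :
  is_metric d -> complete d -> separable d -> continuous_map d f ->
  strongly_mixing d f ->
  forall S : X -> Prop, uniformly_LY_scrambled d f S -> first_category d S.
Proof.
  intros Hm Hc _ Hf Hmix S [[a [b [Ha [Hb Hab]]]] [p [q HS]]].
  pose proof Hm as [Hpos [Hid [Hsym Htri]]].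
  assert (HA : forall m, iter f m a <> iter f m b).
  { intros m Heq.
    assert (Hall : forall m', (m <= m')%nat -> iter f m' a = iter f m' b).
    { intros m' Hmm. induction Hmm; auto. simpl. rewrite IHHmm. auto. }
    assert (HB : exists B, 0 <= B /\ forall j, (j < m)%nat -> d (iter f j a) (iter f j b) <= B).
    { clear Heq Hall. induction m.
      - exists 0. split; [lra|]. intros; lia.
      - destruct IHm as [B [HB0 HB]].
        exists (Rmax B (d (iter f m a) (iter f m b))). split.
        + apply Rle_trans with B; auto. apply Rmax_l.
        + intros j Hj. destruct (Nat.eq_dec j m).
          * subst. apply Rmax_r.
          * apply Rle_trans with B; [apply HB; lia| apply Rmax_l]. }
    destruct HB as [B [HB0 HB]].
    destruct (HS a b Ha Hb Hab) as [_ Hq].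
    destruct (Hq B) as [N HN]. specialize (HN N (le_n N)).
    destruct (le_lt_dec m (q N)) as [Hle|Hlt].
    - rewrite (Hall _ Hle) in HN.
      assert (d (iter f (q N) b) (iter f (q N) b) = 0) by (apply Hid; auto). lra.
    - specialize (HB _ Hlt). lra. }
  assert (HBp : forall N M, exists n, (N <= n)%nat /\ (M <= p n)%nat).
  { intros N M. apply NNPP. intro Hno.
    assert (Hlt : forall n, (N <= n)%nat -> (p n < M)%nat).
    { intros n Hn. destruct (le_lt_dec M (p n)); auto. exfalso; apply Hno; exists n; auto. }
    assert (Heta : exists eta, 0 < eta /\ forall j, (j < M)%nat -> eta <= d (iter f j a) (iter f j b)).
    { clear Hno Hlt. induction M.
      - exists 1. split; [lra|]. intros; lia.
      - destruct IHM as [eta [He0 He]].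
        assert (Hdm : 0 < d (iter f M a) (iter f M b)).
        { destruct (Rle_lt_or_eq _ _ (Hpos (iter f M a) (iter f M b))) as [H|H]; auto.
          exfalso. apply (HA M). apply Hid. auto. }
        exists (Rmin eta (d (iter f M a) (iter f M b))). split.
        + apply Rmin_glb_lt; auto.
        + intros j Hj. destruct (Nat.eq_dec j M).
          * subst. apply Rmin_r.
          * apply Rle_trans with eta; [apply Rmin_l| apply He; lia]. }
    destruct Heta as [eta [He0 He]].
    destruct (HS a b Ha Hb Hab) as [Hp _].
    destruct (Hp eta He0) as [N' HN'].
    specialize (HN' (max N N') (Nat.le_max_r _ _)).
    specialize (He _ (Hlt (max N N') (Nat.le_max_l _ _))).
    unfold R_dist in HN'. rewrite Rminus_0_r, Rabs_pos_eq in HN' by apply Hpos. lra. }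
  assert (Hdab : 0 < d a b).
  { destruct (Rle_lt_or_eq _ _ (Hpos a b)) as [H|H]; auto.
    exfalso. apply Hab. apply Hid. auto. }
  set (eps := d a b / 8).
  set (U := fun (n : nat) (y : X) => exists m, (n <= m)%nat /\ eps < d (iter f (p m) y) (iter f (p m) a)).
  assert (HUo : forall n, open_set d (U n)).
  { intros n y [m [Hnm Hy]].
    destruct (open_gt X d (iter f (p m)) Hm (iter_cont X d f Hf (p m)) (iter f (p m) a) eps y Hy)
      as [e [He Hz]].
    exists e; split; auto. intros z Hdz. exists m; split; auto. }
  exists (fun y => forall n, U n y). split; [|split].
  - exists U. split; auto. intro; tauto.
  - apply baire; auto. intros n x r Hr.
    destruct (Hmix _ (fun y => d a y < d a b / 4) (ball_open X d Hm x r) (ball_ne X d Hm x r Hr)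
      (ball_open X d Hm a (d a b / 4)) (ball_ne X d Hm a (d a b / 4) ltac:(lra))) as [M1 HM1].
    destruct (Hmix _ (fun y => d b y < d a b / 4) (ball_open X d Hm x r) (ball_ne X d Hm x r Hr)
      (ball_open X d Hm b (d a b / 4)) (ball_ne X d Hm b (d a b / 4) ltac:(lra))) as [M2 HM2].
    destruct (HBp n (max M1 M2)) as [m [Hnm Hpm]].
    destruct (HM1 (p m) ltac:(lia)) as [y1 [Hy1 Hv1]].
    destruct (HM2 (p m) ltac:(lia)) as [y2 [Hy2 Hv2]].
    set (u1 := iter f (p m) y1) in *. set (u2 := iter f (p m) y2) in *.
    set (w := iter f (p m) a) in *.
    destruct (Rlt_le_dec eps (d u1 w)) as [H1|H1].
    + exists y1. split; auto. exists m. split; auto.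
    + destruct (Rlt_le_dec eps (d u2 w)) as [H2|H2].
      * exists y2. split; auto. exists m. split; auto.
      * exfalso.
        pose proof (Htri a u1 b). pose proof (Htri u1 w b). pose proof (Htri w u2 b).
        pose proof (Hsym w u2). pose proof (Hsym u2 b). unfold eps in *. lra.
  - intros y Gy Sy. destruct (classic (y = a)) as [->|Hya].
    + destruct (Gy 0%nat) as [m [_ Hm']].
      assert (d (iter f (p m) a) (iter f (p m) a) = 0) by (apply Hid; auto).
      unfold eps in *. lra.
    + destruct (HS y a Sy Ha Hya) as [Hp _].
      destruct (Hp eps ltac:(unfold eps; lra)) as [N HN].
      destruct (Gy N) as [m [Hm' Hgt]].
      specialize (HN m Hm'). unfold R_dist in HN.
      rewrite Rminus_0_r, Rabs_pos_eq in HN by apply Hpos. lra.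
Qed.
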